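(* Let $G$ be a connected graph of order $n\geq 9$ with minimum degree $\delta(G)\geq\frac{n-2}{2}$. Then $prc(G)=\chi'(G)$.
   Context: A path in an edge-coloured graph is a rainbow path if its edges receive pairwise distinct colours. The proper rainbow connection number $prc(G)$ of a connected graph is the minimum number of colours in a proper edge-colouring (adjacent edges get distinct colours) such that every two distinct vertices are joined by a rainbow path. $\chi'(G)$ is the chromatic index. *)

(* Defs.v *)
From mathcomp Require Import all_boot.
Set Implicit Arguments. Unset Strict Implicit. Unset Printing Implicit Defensive.

Section Graphs.
Variable T : finType.

Definition simple_graph (e : rel T) : Prop := symmetric e /\ irreflexive e.

Definition connected_graph (e : rel T) : Prop := forall x y : T, connect e x y.

Definition deg (e : rel T) (x : T) : nat := #|[set y | e x y]|.

(* An edge-colouring with colours in {0,...,k-1}: a map c on ordered pairs,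
   which is symmetric on edges (so it is a colouring of unordered edges). *)
Definition edge_colouring (e : rel T) (k : nat) (c : T -> T -> nat) : Prop :=
  forall x y, e x y -> c x y = c y x /\ c x y < k.

Definition proper_colouring (e : rel T) (k : nat) (c : T -> T -> nat) : Prop :=
  edge_colouring e k c /\
  forall x y z, e x y -> e x z -> y != z -> c x y != c x z.

Definition rainbow_path (e : rel T) (c : T -> T -> nat) (u v : T) (p : seq T) : bool :=
  [&& path e u p, last u p == v, uniq (u :: p) & uniq (pairmap c u p)].

Definition rainbow_connected (e : rel T) (c : T -> T -> nat) : Prop :=
  forall u v, u != v -> exists p, rainbow_path e c u v p.

Definition proper_rainbow_colouring (e : rel T) (k : nat) (c : T -> T -> nat) : Prop :=
  proper_colouring e k c /\ rainbow_connected e c.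

Definition is_chromatic_index (e : rel T) (k : nat) : Prop :=
  (exists c, proper_colouring e k c) /\
  forall j c, proper_colouring e j c -> k <= j.

Definition is_prc (e : rel T) (k : nat) : Prop :=
  (exists c, proper_rainbow_colouring e k c) /\
  forall j c, proper_rainbow_colouring e j c -> k <= j.

End Graphs.

(* Main.v *)
Require Import Defs.
From mathcomp Require Import all_boot.
From mathcomp Require Import zify.
From Stdlib Require Import Classical.

Set Implicit Arguments. Unset Strict Implicit. Unset Printing Implicit Defensive.

Lemma uniq2 (X : eqType) (a b : X) : a != b -> uniq [:: a; b].
Proof. by move=> ab; rewrite /= inE ab. Qed.

Lemma uniq3 (X : eqType) (a b c : X) :
  a != b -> a != c -> b != c -> uniq [:: a; b; c].
Proof. by move=> ab ac bc; rewrite /= !inE negb_or ab ac bc. Qed.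

Lemma uniq4 (X : eqType) (a b c d : X) :
  a != b -> a != c -> a != d -> b != c -> b != d -> c != d ->
  uniq [:: a; b; c; d].
Proof.
by move=> ab ac ad bc bd hcd; rewrite /= !inE !negb_or ab ac ad bc bd hcd.
Qed.

Lemma uniq5 (X : eqType) (a b c d f : X) :
  a != b -> a != c -> a != d -> a != f -> b != c -> b != d -> b != f ->
  c != d -> c != f -> d != f ->
  uniq [:: a; b; c; d; f].
Proof.
by move=> ab ac ad af bc bd bf hcd cf df_;
  rewrite /= !inE !negb_or ab ac ad af bc bd bf hcd cf df_.
Qed.

Section Main.
Variable T : finType.
Variable e : rel T.
Hypothesis sg : simple_graph e.
Hypothesis conn : connected_graph e.
Hypothesis n9 : 9 <= #|T|.
Hypothesis degH : forall x : T, #|T| - 2 <= 2 * deg e x.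

Lemma esym x y : e x y = e y x.
Proof. by case: sg => s _; apply: s. Qed.

Lemma eneq x y : e x y -> x != y.
Proof. case: sg => _ irr exy; apply/eqP => xy; subst; by rewrite irr in exy. Qed.

Variable k : nat.
Variable c : T -> T -> nat.
Hypothesis pc : proper_colouring e k c.

Lemma csym x y : e x y -> c x y = c y x.
Proof. by case: pc => ec _ /ec []. Qed.

Lemma cne x y z : e x y -> e x z -> y != z -> c x y != c x z.
Proof. by case: pc => _; apply. Qed.

Lemma mk_rp u v p : path e u p -> last u p = v -> uniq (u :: p) ->
  uniq (pairmap c u p) -> rainbow_path e c u v p.
Proof. by move=> h1 h2 h3 h4; rewrite /rainbow_path h1 h2 eqxx h3 h4. Qed.

Lemma eS x y : e x y -> e y x. Proof. by rewrite esym. Qed.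

Ltac cl := apply: cne => //; try (by apply: eS); try (by rewrite eq_sym); try (by apply: eS; rewrite eS).

Lemma rainbow_all : rainbow_connected e c.
Proof.
move=> u v uv.
have [euv|neuv] := boolP (e u v).
  by exists [:: v]; apply: mk_rp; rewrite /= ?euv ?inE ?uv.
have [/existsP [w /andP [euw ewv]]|ncn] := boolP [exists w, e u w && e w v].
  exists [:: w; v]; apply: mk_rp => /=; rewrite ?euw ?ewv //.
    by apply: uniq3 => //; apply: eneq.
  by apply: uniq2; rewrite csym //; apply: cne; rewrite // esym.
have nc : forall w, e u w -> e w v = false.
  move=> w euw; apply: negbTE; apply: contraNN ncn => ewv.
  by apply/existsP; exists w; rewrite euw ewv.
have cover : forall w, w != u -> w != v -> e u w || e v w.
  move=> w wu wv; apply/negPn/negP; rewrite negb_or => /andP [nuw nvw].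
  pose X := u |: (v |: (w |: ([set y | e u y] :|: [set y | e v y]))).
  have disj : [set y | e u y] :&: [set y | e v y] = set0.
    apply/setP => y; rewrite !inE; case euy: (e u y) => //=.
    by rewrite esym nc.
  have := max_card X.
  rewrite /X !cardsU1 cardsU disj cards0 !inE !negb_or.
  idtac.
  have irr : forall x, e x x = false by case: sg.
  rewrite uv (eq_sym u w) wu (eq_sym v w) wv (esym v u) !irr (negbTE neuv) nuw nvw /=.
  have := degH u; have := degH v; rewrite /deg. move: #|[set y | e u y]| #|[set y | e v y]| => a b. move: n9; move: #|T| => N; lia.
have irr : forall x, e x x = false by case: sg.
have nuv' : forall b, e v b -> e u b = false.
  move=> b evb; apply: negbTE; apply/negP => eub.
  by rewrite esym in evb; rewrite nc in evb.
have [a [b [eua eab evb]]] : exists a b, [/\ e u a, e a b & e v b].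
  have /connectP [p pp lp] := conn u v.
  suff : forall x, (x = u \/ e u x) -> path e x p -> v = last x p ->
    exists a b, [/\ e u a, e a b & e v b] by apply; [left|..].
  elim: p {pp lp} => [|y p IH] x hx /=.
    move=> _ vx; subst x; case: hx => [vu|]; first by rewrite vu eqxx in uv.
    by rewrite (negbTE neuv).
  move=> /andP [exy pyp] lp.
  have [hy|hy] := boolP ((y == u) || e u y).
    apply: (IH y) => //; case/orP: hy => [/eqP ->|->]; [by left|by right].
  move: hy; rewrite negb_or => /andP [yu nuy].
  have [yv|yv] := eqVneq y v.
    subst y; case: hx => [xu|eux]; first by subst x; rewrite exy in neuv.
    by rewrite nc in exy.
  have := cover y yu yv; rewrite (negbTE nuy) /= => evy.
  case: hx => [xu|eux]; first by subst x; rewrite exy in nuy.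
  by exists x, y.
have ub : u != b by apply/eqP => ub; subst b; rewrite esym evb in neuv.
have eub : e u b = false by apply: nuv'.
have ea_v : e a v = false by apply: nc.
have av : a != v by apply/eqP => av; subst a; rewrite eua in neuv.
have ua : u != a by apply: eneq.
have ab : a != b by apply: eneq.
have bv : b != v by rewrite eq_sym; apply: eneq.
have [hcd|cq] := eqVneq (c u a) (c b v); last first.
  exists [:: a; b; v]; apply: mk_rp; rewrite /= ?eua ?eab ?(esym b v) ?evb //.
    by apply: uniq4.
  apply: uniq3 => //.
    by rewrite (csym eua); apply: cne; rewrite // esym.
  by rewrite (csym eab); apply: cne; rewrite // esym.
pose S := [set w | e a w] :\ u :\ b.
have cS : 1 < #|S|.
  have h1 := degH a; rewrite /deg in h1.
  have h2 := cardsD1 u [set w | e a w].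
  have h3 := cardsD1 b ([set w | e a w] :\ u).
  rewrite -/S in h3.
  have h4 : (u \in [set w | e a w]) <= 1 by case: (_ \in _).
  have h5 : (b \in [set w | e a w] :\ u) <= 1 by case: (_ \in _).
  move: h1 h2 h3 h4 h5 n9.
  move: (nat_of_bool (u \in _)) (nat_of_bool (b \in _)) #|S| #|[set w | e a w] :\ u| #|[set w | e a w]| #|T|.
  move=> x1 x2 s1 s2 s3 N; lia.
have inS : forall w, w \in S -> [/\ e a w, w != u, w != b, w != a & w != v].
  move=> w; rewrite !inE => /and3P [wb wu eaw]; split => //.
    by rewrite eq_sym; apply: eneq.
  by apply/eqP => wv; subst w; rewrite eaw in ea_v.
have [/existsP [w /andP [wS evw]]|nv] := boolP [exists w, (w \in S) && e v w].
  have [eaw wu wb wa wv] := inS w wS.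
  exists [:: a; w; v]; apply: mk_rp; rewrite /= ?eua ?eaw ?(esym w v) ?evw //.
    by apply: uniq4; rewrite // eq_sym.
  apply: uniq3.
  - by rewrite (csym eua); cl.
  - rewrite hcd (csym (_ : e b v)) ?(esym b v) // (csym (_ : e w v)) ?(esym w v) //.
    by apply: cne; rewrite // eq_sym.
  - by rewrite (csym eaw); cl.
have Su : forall w, w \in S -> e u w.
  move=> w wS; have [_ wu _ _ wv] := inS w wS.
  have := cover w wu wv; case/orP => // evw.
  by move: nv; rewrite negb_exists => /forallP /(_ w); rewrite wS evw.
have [w [wS cw]] : exists w, w \in S /\ c u w != c a b.
  have /card_gt1P [w1 [w2 [w1S w2S w12]]] := cS.
  have [h|h] := eqVneq (c u w1) (c a b); last by exists w1.
  exists w2; split => //; rewrite -h; apply: cne; [exact: Su | exact: Su | by rewrite eq_sym].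
have [eaw wu wb wa wv] := inS w wS.
have euw := Su w wS.
exists [:: w; a; b; v]; apply: mk_rp; rewrite /= ?euw ?(esym w a) ?eaw ?eab ?(esym b v) ?evb //.
  by apply: uniq5; rewrite // eq_sym.
have cuw_wa : c u w != c w a.
  by rewrite (csym euw); cl.
have cwa_ab : c w a != c a b.
  by rewrite -(csym eaw); apply: cne.
have cwa_bv : c w a != c b v.
  by rewrite -hcd (csym eua) -(csym eaw); cl.
have cab_bv : c a b != c b v.
  by rewrite (csym eab); cl.
have cuw_bv : c u w != c b v by rewrite -hcd; apply: cne.
by apply: uniq4.
Qed.
End Main.

Lemma min_ex (P : nat -> Prop) : (exists k, P k) ->
  exists k, P k /\ forall j, P j -> k <= j.
Proof.
move=> [k Pk].
elim: k {-2}k (leqnn k) Pk => [|n IH] k kn Pk.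
  by exists k; split=> // j _; move: kn; rewrite leqn0 => /eqP ->.
destruct (classic (exists j, j < k /\ P j)) as [[j [jk Pj]]|H].
  by apply: (IH j) => //; lia.
exists k; split=> // j Pj; rewrite leqNgt; apply/negP => jk.
by apply: H; exists j.
Qed.

Theorem proposition5p10 (T : finType) (e : rel T) :
  simple_graph e -> connected_graph e -> 9 <= #|T| ->
  (forall x : T, #|T| - 2 <= 2 * deg e x) ->
  exists k, is_chromatic_index e k /\ is_prc e k.
Proof.
move=> sg conn n9 degH.
have ex : exists k, exists c, proper_colouring e k c.
  exists (#|T| + #|T|), (fun x y => enum_rank x + enum_rank y); split.
    move=> x y _; split; first by rewrite addnC.
    have := ltn_ord (enum_rank x); have := ltn_ord (enum_rank y); idtac.
    move=> h1 h2; have h3 : enum_rank x < #|T| := h2; have h4 : enum_rank y < #|T| := h1; lia.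
  move=> x y z _ _ yz; rewrite eqn_add2l; apply: contra yz => /eqP h.
  by apply/eqP; apply: enum_rank_inj; apply: val_inj.
have [k [[c pc] kmin]] := min_ex ex.
exists k; split.
  split; first by exists c.
  by move=> j c' h; apply: kmin; exists c'.
split.
  exists c; split => //; exact: (@rainbow_all T e sg conn n9 degH k c pc).
by move=> j c' [h _]; apply: kmin; exists c'.
Qed.
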